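(* Let $G=(V,E)$ be a hypergraph and let $(U,\overline U)$ be a minimal balanced minimum $k$-partition split in $G$ for some integer $k\ge2$. Then for every vertex $u_0\in U$ there exists a subset $S\subseteq U\setminus\{u_0\}$ with $|S|\le 2k-3$ such that $(U,\overline U)$ is the unique minimum $(S\cup\{u_0\},\overline U)$-terminal cut in $G$.
   Context: A hypergraph $G=(V,E)$ has finite vertex set $V$ and finite multiset $E$ of unit-cost hyperedges (subsets of $V$). For $X\subseteq V$, $\overline X=V\setminus X$ and $d(X)$ is the number of hyperedges meeting both $X$ and $\overline X$. The cost of an (ordered) partition of $V$ into non-empty parts is the number of hyperedges meeting at least two parts; a minimum $k$-partition is a $k$-partition of minimum cost. A 2-partition $(U,\overline U)$ is a balanced minimum $k$-partition split if there is a minimum $k$-partition $(V_1,\dots,V_k)$ with $U=\bigcup_{i=1}^{\lfloor k/2\rfloor}V_i$; it is minimal if there is no balanced minimum $k$-partition split $(U',\overline{U'})$ with $U'\subsetneq U$. For disjoint $S,T\subseteq V$, a 2-partition $(X,\overline X)$ is an $(S,T)$-terminal cut if $S\subseteq X\subseteq V\setminus T$, and it is minimum if $d(X)$ is minimum among such cuts. *)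

(* Defs.v *)
From mathcomp Require Import all_boot.
Set Implicit Arguments. Unset Strict Implicit. Unset Printing Implicit Defensive.

(* A hypergraph on a finite vertex type V: hyperedges given as a multiset
   (a sequence) E : seq {set V}, each of unit cost. *)
Section Hyper.
Variable V : finType.
Variable E : seq {set V}.

Definition meets (e X : {set V}) : bool := e :&: X != set0.

Definition dcut (X : {set V}) : nat :=
  count (fun e => meets e X && meets e (~: X)) E.

Definition is_kpart (k : nat) (P : 'I_k -> {set V}) : Prop :=
  (forall i, P i != set0) /\
  (forall i j, i != j -> [disjoint P i & P j]) /\
  (forall v : V, exists i, v \in P i).

Definition part_cost (k : nat) (P : 'I_k -> {set V}) : nat :=
  count (fun e => 2 <= #|[set i | meets e (P i)]|) E.

Definition min_kpart (k : nat) (P : 'I_k -> {set V}) : Prop :=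
  is_kpart P /\ forall Q : 'I_k -> {set V}, is_kpart Q -> part_cost P <= part_cost Q.

Definition balanced_split (k : nat) (U : {set V}) : Prop :=
  exists P : 'I_k -> {set V},
    min_kpart P /\ U = \bigcup_(i : 'I_k | i < k./2) P i.

Definition minimal_balanced_split (k : nat) (U : {set V}) : Prop :=
  balanced_split k U /\ ~ (exists U' : {set V}, U' \proper U /\ balanced_split k U').

Definition terminal_cut (S T X : {set V}) : Prop :=
  X != set0 /\ ~: X != set0 /\ S \subset X /\ X \subset ~: T.

Definition unique_min_terminal_cut (S T X : {set V}) : Prop :=
  terminal_cut S T X /\
  forall Y : {set V}, terminal_cut S T Y -> Y != X -> dcut X < dcut Y.
End Hyper.

(* Main.v *)
Require Import Defs.
From mathcomp Require Import all_boot zify.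
Set Implicit Arguments. Unset Strict Implicit. Unset Printing Implicit Defensive.

Section Basic.
Variable V : finType.

Definition cr (e X : {set V}) : bool := meets e X && meets e (~: X).

Lemma meetsP (e X : {set V}) : reflect (exists2 x, x \in e & x \in X) (meets e X).
Proof.
rewrite /meets; apply: (iffP (set0Pn _)) => [[x]|[x h1 h2]].
  by rewrite inE => /andP[h1 h2]; exists x.
by exists x; rewrite inE h1 h2.
Qed.

Lemma dcutE (E : seq {set V}) X : dcut E X = \sum_(e <- E) cr e X.
Proof. by rewrite /dcut -sum1_count big_mkcond. Qed.

Lemma sum_bool_card (T : finType) (P : pred T) : \sum_(i : T) (P i : nat) = #|[set i | P i]|.
Proof.
rewrite -sum1_card [RHS]big_mkcond; apply: eq_bigr => i _.
by rewrite inE; case: (P i).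
Qed.

Lemma sum_range a b p : a <= b -> b <= p ->
  \sum_(1 <= j < p.+1) ((a < j) && (j <= b)) = b - a.
Proof.
elim: p b => [|p IH] b hab hbp.
  by rewrite big_geq //; lia.
rewrite big_nat_recr //=.
case: (leqP b p) => hb.
  by rewrite IH // andbF addn0.
have hb' : b = p.+1 by lia.
subst b.
have E1 : \sum_(1 <= j < p.+1) ((a < j) && (j <= p.+1)) = \sum_(1 <= j < p.+1) ((a < j) && (j <= p)).
  apply: eq_big_nat => j /andP[_ hj].
  have -> : j <= p.+1 by lia.
  by have -> : j <= p by lia.
rewrite E1 andbT ltnS.
case: (leqP a p) => ha.
  rewrite (IH p) //; lia.
rewrite (@eq_big_nat _ _ _ 1 p.+1 _ (fun _ => 0)).
  by rewrite sum_nat_const_nat muln0 add0n; lia.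
move=> j /andP[h1 h2]; have -> : (a < j) = false by apply/negbTE; lia.
done.
Qed.

End Basic.

Section Core.
Variable V : finType.
Variable E : seq {set V}.
Variable U : {set V}.
Variable m : nat.
Variable W : 'I_m * bool -> {set V}.
Hypothesis HW : forall i, W i \subset U.

Definition RR i := W i :\: \bigcup_(j | j != i) W j.
Definition cov x := #|[set i | x \in W i]|.
Definition ZZ j := [set x in U | j <= cov x].
Definition own (e : {set V}) := #|[set i | e :&: U \subset W i]|.
Definition XX (e : {set V}) : nat :=
  [exists i : 'I_m, cr e (RR (i,false))] + [exists i : 'I_m, cr e (RR (i,true))].

Lemma RR_W i : RR i \subset W i.
Proof. by rewrite /RR subsetDl. Qed.

Lemma RR_U i : RR i \subset U.
Proof. exact: subset_trans (RR_W i) (HW i). Qed.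

Lemma RR_disj i j x : x \in RR i -> x \in W j -> j = i.
Proof.
rewrite /RR inE => /andP[hn _] hj; apply/eqP; apply: contraNT hn => hji.
by apply/bigcupP; exists j.
Qed.

Lemma crR_own e i j : e :&: U \subset W j -> cr e (RR i) -> i = j.
Proof.
move=> hs /andP[/meetsP[y ye yR] _].
have yU : y \in U by apply: (subsetP (RR_U i)).
have yW : y \in W j by apply: (subsetP hs); rewrite inE ye yU.
by rewrite (RR_disj yR yW).
Qed.

Lemma XX_le e : XX e <= (own e < 1) + (own e < 2).
Proof.
rewrite /XX.
case: (ltnP 1 (own e)) => h2.
  move/card_gt1P: h2 => [j1 [j2 [h1 h2 h12]]].
  rewrite !inE in h1 h2.
  have F : forall b, [exists i : 'I_m, cr e (RR (i, b))] = false.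
    move=> b; apply/negbTE/existsPn => i; apply/negP => hc.
    have e1 := crR_own h1 hc; have e2 := crR_own h2 hc.
    by move: h12; rewrite -e1 -e2 eqxx.
  by rewrite !F.
case: (ltnP 0 (own e)) => h1.
  case/card_gt0P: (h1) => j1; rewrite inE => hj1.
  have F : forall b, b != j1.2 -> [exists i : 'I_m, cr e (RR (i, b))] = false.
    move=> b hb; apply/negbTE/existsPn => i; apply/negP => hc.
    have e1 := crR_own hj1 hc.
    by move: hb; rewrite -e1 eqxx.
  have -> : (own e < 1) = false by apply/negbTE; lia.
  have -> : (own e < 2) = true by lia.
  move: F; case: j1 hj1 => j [] _ F /=.
    by rewrite (F false) //= !add0n leq_b1.
  by rewrite (F true) //= addn0 add0n leq_b1.
have -> : own e = 0 by lia.
by rewrite /=; case: [exists _, _]; case: [exists _, _].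
Qed.

Definition pp := (m * 2)%N.
Lemma card_I : #|{: 'I_m * bool}| = pp.
Proof. by rewrite card_prod card_ord card_bool. Qed.

Lemma own_le_cov (e : {set V}) y : y \in e -> y \in U -> own e <= cov y.
Proof.
move=> ye yU; apply: subset_leq_card; apply/subsetP => i; rewrite !inE => h.
by apply: (subsetP h); rewrite inE ye yU.
Qed.

Lemma cov_le x : cov x <= pp.
Proof. by rewrite -card_I max_card. Qed.

Lemma own_le (e : {set V}) : own e <= pp.
Proof. by rewrite -card_I max_card. Qed.

Lemma crZ_own (e : {set V}) j : cr e (U :\: ZZ j) -> own e < j.
Proof.
case/andP=> /meetsP[y ye]; rewrite !inE => /andP[hy yU] _.
rewrite yU /= -ltnNge in hy.
exact: leq_ltn_trans (own_le_cov ye yU) hy.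
Qed.

Lemma sum_split2 (F : nat -> nat) : 1 < pp ->
  \sum_(1 <= j < pp.+1) F j = F 1 + F 2 + \sum_(3 <= j < pp.+1) F j.
Proof.
move=> h; rewrite big_ltn; last lia.
by rewrite big_ltn ?addnA //; lia.
Qed.

Lemma PE_out (e : {set V}) : e :&: U = set0 ->
  XX e + \sum_(3 <= j < pp.+1) cr e (U :\: ZZ j) <= \sum_i cr e (U :\: W i).
Proof.
move=> h0.
have N : forall A : {set V}, A \subset U -> meets e A = false.
  move=> A hA; apply/negbTE/negP => /meetsP[y ye yA].
  have : y \in e :&: U by rewrite inE ye (subsetP hA).
  by rewrite h0 inE.
have X0 : XX e = 0.
  rewrite /XX.
  have F : forall b, [exists i : 'I_m, cr e (RR (i, b))] = false.
    by move=> b; apply/negbTE/existsPn => i; rewrite /cr N ?RR_U.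
  by rewrite !F.
rewrite X0 add0n big1_seq //= => j _; by rewrite /cr N ?subsetDl.
Qed.

Lemma sum_card_compl (P : pred ('I_m * bool)) :
  \sum_i (~~ P i : nat) = pp - #|[set i | P i]|.
Proof.
rewrite sum_bool_card.
have h := cardsC [set i | P i].
have h2 : #|~: [set i | P i]| = #|[set i | ~~ P i]| by apply: eq_card => i; rewrite !inE.
rewrite h2 card_I in h; lia.
Qed.

Lemma PE_T (e : {set V}) : 0 < m -> meets e (~: U) -> e :&: U != set0 ->
  XX e + \sum_(3 <= j < pp.+1) cr e (U :\: ZZ j) <= \sum_i cr e (U :\: W i).
Proof.
move=> hm hT hU.
have R1 : \sum_i cr e (U :\: W i) = pp - own e.
  rewrite /own -sum_card_compl; apply: eq_bigr => i _; congr nat_of_bool.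
  rewrite /cr.
  have -> : meets e (~: (U :\: W i)) = true.
    case/meetsP: hT => y ye yU; apply/meetsP; exists y => //.
    by rewrite !inE in yU *; rewrite (negbTE yU) andbF.
  rewrite andbT; apply/meetsP/idP.
    case=> y ye; rewrite !inE => /andP[yW yU]; apply/negP => hs.
    by move: yW; rewrite (subsetP hs) // inE ye yU.
  case/subsetPn => y; rewrite inE => /andP[ye yU] yW.
  by exists y => //; rewrite !inE yW yU.
have L : \sum_(3 <= j < pp.+1) cr e (U :\: ZZ j) <=
         \sum_(3 <= j < pp.+1) ((own e < j) && (j <= pp)).
  rewrite big_nat_cond [X in _ <= X]big_nat_cond; apply: leq_sum => j /andP[/andP[h1 h2] _].
  case h: (cr e (U :\: ZZ j)) => //=.
  by rewrite (crZ_own h) /=; lia.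
have S := sum_range (own_le e) (leqnn pp).
rewrite sum_split2 /= in S; last by rewrite /pp; lia.
have h1 : 0 < pp by rewrite /pp; lia.
have h2 : 1 < pp by rewrite /pp; lia.
rewrite h1 h2 !andbT in S.
rewrite R1; have := XX_le e; lia.
Qed.

Lemma crZ_in (e : {set V}) j : e \subset U -> cr e (U :\: ZZ j) ->
  exists2 z, z \in e & j <= cov z.
Proof.
move=> heU /andP[_ /meetsP[z ze]]; rewrite !inE (subsetP heU z ze) andbT negbK => /andP[_ h].
by exists z.
Qed.

Lemma cov_ge2 x i j : x \in W i -> x \in W j -> i != j -> 1 < cov x.
Proof.
move=> hi hj hij; apply/card_gt1P; exists i, j; by rewrite !inE hi hj hij.
Qed.

Lemma XX_sum (e : {set V}) : XX e <= \sum_i cr e (RR i).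
Proof.
rewrite (bigID (fun i : 'I_m * bool => i.2)) /= addnC /XX.
have F : forall b, [exists i : 'I_m, cr e (RR (i, b))] <= \sum_(i | i.2 == b) cr e (RR i).
  move=> b; case: existsP => // [[a ha]].
  by rewrite (bigD1 (a,b)) //= ha.
apply: leq_add.
  apply: leq_trans (F false) _; rewrite leq_eqVlt; apply/orP; left; apply/eqP.
  by apply: eq_bigl => i; case: i.2.
apply: leq_trans (F true) _; rewrite leq_eqVlt; apply/orP; left; apply/eqP.
by apply: eq_bigl => i; case: i.2.
Qed.

Lemma PE_in (e : {set V}) : 0 < m -> e \subset U -> e != set0 ->
  XX e + \sum_(3 <= j < pp.+1) cr e (U :\: ZZ j) <= \sum_i cr e (U :\: W i).
Proof.
move=> hm heU /set0Pn[x0 x0e].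
case: (@arg_maxnP V x0 (fun x => x \in e) cov x0e) => x xe xmax.
have eUe : e :&: U = e by apply/setIidPl.
case: (leqP (cov x) 1) => hM.
  rewrite big_nat_cond big1 ?addn0; last first.
    move=> j /andP[/andP[hj _] _]; case hc: (cr _ _) => //.
    case: (crZ_in heU hc) => z ze hz; move: (xmax z ze) => /= hzx; lia.
  apply: leq_trans (XX_sum e) _; apply: leq_sum => i _.
  case h: (cr e (RR i)) => //.
  case/andP: h => /meetsP[y ye yR] /meetsP[z ze zR].
  have yW : y \in W i by apply: (subsetP (RR_W i)).
  have zW : z \notin W i.
    apply/negP => zW; rewrite inE in zR.
    move: zR; rewrite /RR !inE zW andbT negbK => /bigcupP[j hj zWj].
    have := cov_ge2 zWj zW hj; move: (xmax z ze) => /= hzx; lia.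
  rewrite /= lt0b; apply/andP; split; apply/meetsP.
    by exists z => //; rewrite !inE zW (subsetP heU z ze).
  by exists y => //; rewrite !inE yW.
have R1 : cov x <= \sum_i cr e (U :\: W i) + own e.
  rewrite sum_bool_card /own.
  apply: leq_trans (leq_card_setU _ _).
  apply: subset_leq_card; apply/subsetP => i; rewrite !inE => xW.
  rewrite eUe; case hs: (e \subset W i); rewrite ?orbT //= orbF.
  case/subsetPn: (negbT hs) => z ze zW.
  apply/andP; split; apply/meetsP.
    by exists z => //; rewrite !inE zW (subsetP heU z ze).
  by exists x => //; rewrite !inE xW.
have L : \sum_(3 <= j < pp.+1) cr e (U :\: ZZ j) <=
         \sum_(3 <= j < pp.+1) ((own e < j) && (j <= cov x)).
  apply: leq_sum => j _.
  case h: (cr e (U :\: ZZ j)) => //=.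
  rewrite (crZ_own h) /=; case: (crZ_in heU h) => z ze hz.
  by move: (xmax z ze) => /= hzx; lia.
have S := sum_range (own_le_cov xe (subsetP heU x xe)) (cov_le x).
rewrite sum_split2 /= in S; last by rewrite /pp; lia.
have h1 : 0 < cov x by lia.
rewrite h1 hM !andbT in S.
have := XX_le e; lia.
Qed.

Lemma PE (e : {set V}) : 0 < m ->
  XX e + \sum_(3 <= j < pp.+1) cr e (U :\: ZZ j) <= \sum_i cr e (U :\: W i).
Proof.
move=> hm.
case h0: (e :&: U == set0); first by apply: PE_out; apply/eqP.
case hT: (meets e (~: U)); first by apply: PE_T => //; rewrite h0.
apply: PE_in => //.
  apply/subsetP => y ye; apply: contraFT hT => yU; apply/meetsP; exists y => //.
  by rewrite inE.
by apply: contraFN h0 => /eqP ->; rewrite set0I.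
Qed.

Lemma core_sum : 0 < m ->
  (forall i, dcut E (U :\: W i) <= dcut E U) ->
  (forall j, 3 <= j -> dcut E U <= dcut E (U :\: ZZ j)) ->
  \sum_(e <- E) XX e <= 2 * dcut E U.
Proof.
move=> hm hB hL.
have S1 : \sum_(e <- E) (XX e + \sum_(3 <= j < pp.+1) cr e (U :\: ZZ j))
          <= \sum_(e <- E) \sum_i cr e (U :\: W i).
  by apply: leq_sum => e _; apply: PE.
rewrite big_split /= in S1.
rewrite exchange_big [X in _ <= X]exchange_big /= in S1.
have A1 : \sum_i \sum_(e <- E) cr e (U :\: W i) <= pp * dcut E U.
  rewrite -card_I -sum_nat_const; apply: leq_sum => i _; rewrite -dcutE; exact: hB.
have A2 : (pp.+1 - 3) * dcut E U <= \sum_(3 <= j < pp.+1) \sum_(e <- E) cr e (U :\: ZZ j).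
  rewrite -sum_nat_const_nat big_nat_cond [X in _ <= X]big_nat_cond.
  apply: leq_sum => j /andP[/andP[hj _] _]; rewrite -dcutE; exact: hL.
set d := dcut E U in A1 A2 *.
set s1 := \sum_(e <- E) XX e in S1 *.
have hp : pp = m * 2 by [].
rewrite hp in A1 A2 S1.
have e3 : (m * 2).+1 - 3 = m * 2 - 2 by lia.
move: A2; rewrite e3 mulnBl => A2.
have h2 : 2 * d <= m * 2 * d by rewrite leq_mul2r; lia.
move: S1 A1 A2 h2.
set T1 := \sum_(3 <= j < (m * 2).+1) _.
set T2 := \sum_i _.
set M := m * 2 * d.
lia.
Qed.

End Core.

Section Part.
Variable V : finType.
Variable E : seq {set V}.

Lemma dcut_le_cost k (P : 'I_k -> {set V}) :
  is_kpart P -> dcut E (\bigcup_(i : 'I_k | i < k./2) P i) <= part_cost E P.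
Proof.
case=> _ [_ hcov]; rewrite /dcut /part_cost; apply: sub_count => e /andP[].
case/meetsP => x xe /bigcupP[i hi xi] /meetsP[y ye yU].
case: (hcov y) => i' yi'.
apply/card_gt1P; exists i, i'; rewrite !inE; split.
- by apply/meetsP; exists x.
- by apply/meetsP; exists y.
- apply/negP => /eqP hii; subst i'.
  by move: yU; rewrite inE => /negP; apply; apply/bigcupP; exists i.
Qed.

Variable U : {set V}.
Variable u0 : V.
Hypothesis u0U : u0 \in U.
Variable m : nat.
Variable R : 'I_m -> {set V}.
Hypothesis Rne : forall j, R j != set0.
Hypothesis Rdisj : forall j j' x, x \in R j -> x \in R j' -> j = j'.
Hypothesis RU : forall j, R j \subset U.
Hypothesis u0R : forall j, u0 \notin R j.

Definition QQ (i : 'I_m.+1) : {set V} :=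
  match unlift ord_max i with
  | Some j => R j
  | None => ~: \bigcup_(j : 'I_m) R j
  end.

Lemma QQ_disj i i' x : x \in QQ i -> x \in QQ i' -> i = i'.
Proof.
rewrite /QQ; case: unliftP => [j ->|->]; case: unliftP => [j' ->|->] //.
- by move=> h1 h2; rewrite (Rdisj h1 h2).
- by move=> h1; rewrite inE => /negP[]; apply/bigcupP; exists j.
- by rewrite inE => /negP h1 h2; case: h1; apply/bigcupP; exists j'.
Qed.

Lemma QQ_kpart : is_kpart QQ.
Proof.
split; [|split].
- move=> i; rewrite /QQ; case: unliftP => [j _|_]; first exact: Rne.
  apply/set0Pn; exists u0; rewrite inE; apply/negP => /bigcupP[j _ hj].
  by move: (u0R j); rewrite hj.
- move=> i j hij; rewrite -setI_eq0; apply/eqP/setP => x; rewrite !inE.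
  apply/negP => /andP[h1 h2]; move: hij; by rewrite (QQ_disj h1 h2) eqxx.
- move=> v; case: (boolP (v \in \bigcup_(j : 'I_m) R j)).
    case/bigcupP => j _ hj; exists (lift ord_max j); by rewrite /QQ liftK.
  by move=> hv; exists ord_max; rewrite /QQ unlift_none inE.
Qed.

Lemma QQ_cost : part_cost E QQ <= count (fun e => [exists j, cr e (R j)]) E.
Proof.
rewrite /part_cost; apply: sub_count => e /card_gt1P[i1 [i2 []]].
rewrite !inE => h1 h2 h12.
have key : forall i i', i != i' -> meets e (QQ i) -> meets e (QQ i') ->
   forall j, unlift ord_max i = Some j -> [exists j, cr e (R j)].
  move=> i i' hii hi hi' j hj; apply/existsP; exists j; apply/andP; split.
    by move: hi; rewrite /QQ hj.
  case/meetsP: hi' => y ye yQ; apply/meetsP; exists y => //; rewrite inE.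
  apply/negP => yR; have yQi : y \in QQ i by rewrite /QQ hj.
  by move: hii; rewrite (QQ_disj yQi yQ) eqxx.
case hu1: (unlift ord_max i1) => [j1|]; first exact: key h12 h1 h2 j1 hu1.
case hu2: (unlift ord_max i2) => [j2|]; first by apply: key _ h2 h1 j2 hu2; rewrite eq_sym.
have E1 : i1 = ord_max by move: hu1; case: (unliftP ord_max i1).
have E2 : i2 = ord_max by move: hu2; case: (unliftP ord_max i2).
by rewrite E1 E2 eqxx in h12.
Qed.

Lemma QQ_proper : 0 < m -> \bigcup_(i : 'I_m.+1 | i < (m.+1)./2) QQ i \proper U.
Proof.
move=> hm; apply/properP; split; last first.
  exists u0 => //; apply/negP => /bigcupP[i hi].
  rewrite /QQ; case: unliftP => [j _|hi']; first by apply/negP.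
  by move: hi; rewrite hi' /=; lia.
apply/subsetP => x /bigcupP[i hi].
rewrite /QQ; case: unliftP => [j _|hi']; first by apply: (subsetP (RU j)).
by move: hi; rewrite hi' /=; lia.
Qed.

End Part.

Definition tcb (V : finType) (S0 T X : {set V}) : bool :=
  [&& X != set0, ~: X != set0, S0 \subset X & X \subset ~: T].

Lemma tcbP (V : finType) (S0 T X : {set V}) : reflect (terminal_cut S0 T X) (tcb S0 T X).
Proof.
rewrite /tcb /terminal_cut; apply: (iffP and4P).
  by case=> a b c d; do !split.
by case=> a [b [c d]]; split.
Qed.

Unset Implicit Arguments.

Theorem theorem5p2 (V : finType) (E : seq {set V}) (k : nat) (U : {set V}) :
  2 <= k ->
  minimal_balanced_split E k U ->
  forall u0 : V, u0 \in U ->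
  exists S : {set V},
    [/\ S \subset U :\ u0, #|S| <= 2 * k - 3 &
        unique_min_terminal_cut E (u0 |: S) (~: U) U].
Proof.
case: k => [|m]; first by [].
move=> hk [[P [[HPk HPmin] HU]] Hmin] u0 u0U.
have hm : 0 < m by lia.
have Hno : forall Q : 'I_m.+1 -> {set V}, is_kpart Q -> part_cost E Q <= dcut E U ->
   \bigcup_(i : 'I_m.+1 | i < m.+1./2) Q i \proper U -> False.
  move=> Q hQ hc hp; apply: Hmin; exists (\bigcup_(i : 'I_m.+1 | i < m.+1./2) Q i); split => //.
  exists Q; split => //; split => // Q' hQ'.
  apply: leq_trans hc _; apply: leq_trans (HPmin Q' hQ'); rewrite HU; exact: dcut_le_cost.
have cUne : ~: U != set0.
  case: HPk => hne [hdisj _].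
  case/set0Pn: (hne ord_max) => x hx; apply/set0Pn; exists x; rewrite inE HU.
  apply/negP => /bigcupP[i hi xi].
  have hio : i != ord_max by apply/negP => /eqP hio; move: hi; rewrite hio /=; lia.
  have := hdisj _ _ hio; rewrite -setI_eq0 => /eqP/setP/(_ x); by rewrite !inE xi hx.
set goodb := fun S : {set V} => (S \subset U :\ u0) &&
  [forall Y : {set V}, (tcb (u0 |: S) (~: U) Y && (Y != U)) ==> (dcut E U < dcut E Y)].
have good_unique : forall S, goodb S -> unique_min_terminal_cut E (u0 |: S) (~: U) U.
  move=> S /andP[hS /forallP hY]; split.
    apply/tcbP; rewrite /tcb setCK subxx cUne.
    have -> : U != set0 by apply/set0Pn; exists u0.
    rewrite /= subUset sub1set u0U /= andbT; exact: subset_trans hS (subD1set _ _).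
  move=> Y /tcbP hYt hYU; have := hY Y; by rewrite hYt hYU.
have good0 : goodb (U :\ u0).
  rewrite /goodb subxx /=; apply/forallP => Y; apply/implyP => /andP[hY hYU].
  case/and4P: hY => _ _ h1 h2.
  have : Y == U.
    rewrite eqEsubset; rewrite setCK in h2; rewrite h2 /=.
    apply: subset_trans h1; rewrite setD1K //.
  by rewrite (negbTE hYU).
case: (@arg_minnP _ (U :\ u0) goodb (fun S => #|S|) good0) => S hgS hminS.
exists S; split; [by case/andP: hgS| |exact: good_unique].
rewrite leqNgt; apply/negP => hlt.
have hI : #|{: 'I_m * bool}| <= #|S| by rewrite card_prod card_ord card_bool; lia.
pose f := fun i : 'I_m * bool => enum_val (widen_ord hI (enum_rank i)).
have fS : forall i, f i \in S by move=> i; exact: enum_valP.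
have finj : injective f.
  move=> i j /enum_val_inj /(congr1 val) /= hv; apply: enum_rank_inj; exact: val_inj.
case/andP: (hgS) => hS /forallP hallS.
have hgoodS : forall Y, tcb (u0 |: S) (~: U) Y -> Y != U -> dcut E U < dcut E Y.
  by move=> Y h1 h2; have := hallS Y; rewrite h1 h2.
have wit : forall i, exists Y : {set V},
    [&& tcb (u0 |: (S :\ f i)) (~: U) Y, Y != U & dcut E Y <= dcut E U].
  move=> i; have hng : ~~ goodb (S :\ f i).
    apply/negP => hg; have := hminS _ hg; rewrite (cardsD1 (f i) S) fS; lia.
  move: hng; rewrite /goodb.
  have -> : S :\ f i \subset U :\ u0 by exact: subset_trans (subD1set _ _) hS.
  rewrite /= negb_forall => /existsP[Y]; rewrite negb_imply -leqNgt => hY; exists Y; by rewrite andbA.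
case: (fin_all_exists wit) => Yf hYf.
have YU : forall i, Yf i \subset U.
  by move=> i; case/and3P: (hYf i) => /and4P[_ _ _]; rewrite setCK.
have subY : forall i, u0 |: (S :\ f i) \subset Yf i.
  by move=> i; case/and3P: (hYf i) => /and4P[].
have fY : forall i, f i \notin Yf i.
  move=> i; apply/negP => hf; case/and3P: (hYf i) => ht hne hle.
  have ht' : tcb (u0 |: S) (~: U) (Yf i).
    case/and4P: ht => a b c d; rewrite /tcb a b d /= andbT.
    apply/subsetP => x; rewrite !inE => /orP[/eqP->|xS].
      by apply: (subsetP c); rewrite !inE eqxx.
    case: (eqVneq x (f i)) => [->|hx] //.
    by apply: (subsetP c); rewrite !inE hx xS orbT.
  by have := hgoodS _ ht' hne; lia.
pose W := fun i => U :\: Yf i.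
have HW : forall i, W i \subset U by move=> i; exact: subsetDl.
have SU : forall s, s \in S -> s \in U.
  by move=> s hs; have := subsetP hS s hs; rewrite !inE => /andP[].
have WS : forall i s, s \in S -> s \in W i -> s = f i.
  move=> i s hs; rewrite inE => /andP[hsY _]; apply/eqP; apply: contraNT hsY => hsf.
  by apply: (subsetP (subY i)); rewrite !inE hsf hs orbT.
have fW : forall i, f i \in W i by move=> i; rewrite inE fY SU.
have u0W : forall i, u0 \notin W i.
  by move=> i; rewrite inE (subsetP (subY i)) // !inE eqxx.
have hB : forall i, dcut E (U :\: W i) <= dcut E U.
  move=> i; rewrite /W setDDr setDv set0U (setIidPr (YU i)).
  by case/and3P: (hYf i).
have covS : forall s, s \in S -> cov W s <= 1.
  move=> s hs; rewrite leqNgt; apply/negP => /card_gt1P[i1 [i2 [h1 h2 h12]]].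
  have h1' : s \in W i1 by move: h1; rewrite !inE.
  have h2' : s \in W i2 by move: h2; rewrite !inE.
  by move: h12; rewrite -(finj _ _ (etrans (esym (WS _ _ hs h1')) (WS _ _ hs h2'))) eqxx.
have covu0 : cov W u0 = 0.
  apply/eqP; rewrite cards_eq0; apply/eqP/setP => i; rewrite !inE.
  by apply/negbTE; move: (u0W i); rewrite !inE.
have hL : forall j, 3 <= j -> dcut E U <= dcut E (U :\: ZZ U W j).
  move=> j hj; case: (eqVneq (ZZ U W j) set0) => hZ.
    by rewrite hZ setD0.
  have Yne : u0 \in U :\: ZZ U W j by rewrite !inE u0U covu0 /=; lia.
  apply: ltnW; apply: hgoodS.
    rewrite /tcb setCK subsetDl andbT; apply/and3P; split.
    - by apply/set0Pn; exists u0.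
    - case/set0Pn: cUne => z hz; apply/set0Pn; exists z.
      by rewrite !inE; rewrite inE in hz; rewrite (negbTE hz) andbF.
    - apply/subsetP => x; rewrite !inE => /orP[/eqP->|xS].
        by rewrite u0U covu0 /=; lia.
      by rewrite SU //= andbT -ltnNge; have := covS x xS; lia.
  case/set0Pn: hZ => z; rewrite inE => /andP[zU hz].
  apply/negP => /eqP hE; move: zU; rewrite -hE !inE hz /= andbT; by case: (z \in U).
have hsum := core_sum HW hm hB hL.
have cnt : forall b, \sum_(e <- E) ([exists j : 'I_m, cr e (RR W (j, b))] : nat)
    = count (fun e => [exists j : 'I_m, cr e (RR W (j, b))]) E.
  move=> b; rewrite -sum1_count [RHS]big_mkcond; apply: eq_bigr => e _ /=; by case: [exists _, _].
have hsplit : \sum_(e <- E) XX W e =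
    count (fun e => [exists j : 'I_m, cr e (RR W (j, false))]) E +
    count (fun e => [exists j : 'I_m, cr e (RR W (j, true))]) E.
  by rewrite -!cnt -big_split.
have [b hb] : exists b, count (fun e => [exists j : 'I_m, cr e (RR W (j, b))]) E <= dcut E U.
  case: (leqP (count (fun e => [exists j : 'I_m, cr e (RR W (j, false))]) E) (dcut E U)) => h.
    by exists false.
  by exists true; lia.
pose R := fun j : 'I_m => RR W (j, b).
have fR : forall i, f i \in RR W i.
  move=> i; rewrite /RR inE fW andbT; apply/negP => /bigcupP[j hj hfj].
  by move: hj; rewrite (finj _ _ (esym (WS _ _ (fS i) hfj))) eqxx.
have Rne : forall j, R j != set0 by move=> j; apply/set0Pn; exists (f (j, b)).
have Rdisj : forall j j' x, x \in R j -> x \in R j' -> j = j'.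
  move=> j j' x h1 h2; have h2' := subsetP (RR_W W (j', b)) x h2.
  by have := RR_disj h1 h2' => /(congr1 fst).
have u0R : forall j, u0 \notin R j.
  move=> j; apply/negP => h; move: (u0W (j, b)); by rewrite (subsetP (RR_W W (j, b)) u0 h).
have RU : forall j, R j \subset U by move=> j; exact: (RR_U HW (j, b)).
apply: (Hno (QQ R)).
- exact: QQ_kpart Rne Rdisj u0R.
- exact: leq_trans (QQ_cost E Rdisj) hb.
- by move: (QQ_proper u0U RU u0R hm).
Qed.
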